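(* Consider the sample versions of the stable CPC-like and stable MPC-like algorithms for LWF chain graphs, in which each conditional independence query ''$u\perp\!\!\!\perp v\mid S$'' is answered by a fixed (possibly erroneous) deterministic rule depending only on $(u,v,S)$, symmetric in $u,v$. Then the decisions about U-structures (which edges are unambiguous and which are oriented as complex arrows in the complex recovery phase) do not depend on the ordering $\mathrm{order}(V)$ of the variables. Moreover, the outputs of the sample versions of the stable CPC-like and stable MPC-like algorithms are entirely independent of $\mathrm{order}(V)$.
   Context: Let $V$ be a finite set of variables. Stable skeleton recovery with ordering $\mathrm{order}(V)$: start with the complete undirected graph $H$ on $V$; for $i=0,\dots,|V|-2$, first store $a_H(x)$ := current adjacency set of each vertex $x$, then while possible select (in an order determined by $\mathrm{order}(V)$) an ordered pair $(u,v)$, still adjacent in $H$, with $u\in a_H(v)$ and $|a_H(u)\setminus\{v\}|\ge i$; if some $S\subseteq a_H(u)\setminus\{v\}$ with $|S|=i$ is judged to satisfy $u\perp\!\!\!\perp v\mid S$, remove $u-v$ from $H$. The sets $a_H$ are not updated within a level. Complex recovery (CPC-like): set $H^*=H$. For each pair $u,v$ non-adjacent in $H$, determine all separating sets, i.e. all $S\subseteq ad_H(u)$ judged to satisfy $u\perp\!\!\!\perp v\mid S$. An edge $u-w$ of $H^*$ is unambiguous if at least one separating set exists and either for every separating set $S$, $u\perp\!\!\!\perp v\mid S\cup\{w\}$ is judged to hold, or for none of them; otherwise it is ambiguous (and marked). An unambiguous $u-w$ is oriented $u\to w$ iff for no separating set $S$ is $u\perp\!\!\!\perp v\mid S\cup\{w\}$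 judged to hold. MPC-like with parameters $0\le\alpha\le\beta\le100$: $u-w$ is unambiguous if at least one separating set exists and the percentage of separating sets $S$ with $u\perp\!\!\!\perp v\mid S\cup\{w\}$ judged to hold is at most $\alpha$ or at least $\beta$; an unambiguous $u-w$ is oriented $u\to w$ iff that percentage is less than $\alpha$. Pattern step: for each pair of arrows $u_1\to w_1$, $u_2\to w_2$ of $H^*$ with $u_1\neq u_2$, label both as complex arrows if there is an undirected path in $H^*$ from $w_1$ to $w_2$ none of whose intermediate vertices is adjacent to $u_1$ or $u_2$; afterwards all unlabeled arrows are made undirected. The output is the resulting graph, with ambiguous edges marked. The stable CPC-like (resp. stable MPC-like) algorithm is stable skeleton recovery followed by CPC-like (resp. MPC-like) complex recovery and the pattern step. *)

(* Defs.v *)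
From HB Require Import structures.
From mathcomp Require Import all_boot all_order all_algebra.
Set Implicit Arguments. Unset Strict Implicit. Unset Printing Implicit Defensive.
Import Order.TTheory GRing.Theory Num.Theory.

Section ChainGraphPC.
Variable V : finType.

(* A (judged) conditional-independence oracle: ind u v S  means
   "u _||_ v | S is judged to hold". *)
Definition ci_oracle := V -> V -> {set V} -> bool.

(* Undirected graphs on V are encoded as symmetric sets of ordered pairs:
   u - v is an edge iff (u,v) \in H (and then (v,u) \in H). *)
Definition ugraph := {set V * V}.

Definition adj (H : ugraph) (x : V) : {set V} := [set y | (x, y) \in H].

Definition complete_graph : ugraph := [set e : V * V | e.1 != e.2].

(* The adjacency sets a_H are frozen
   at the beginning of the level (computed from H); the ordered pairs (u,v)
   are visited in the lexicographic order induced by the ordering ord of V;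
   the current graph H' is updated as edges are removed. *)
Definition level_step (ind : ci_oracle) (ord : seq V) (i : nat) (H : ugraph)
  : ugraph :=
  let a := adj H in
  foldl (fun (H' : ugraph) (p : V * V) =>
           let u := p.1 in let v := p.2 in
           if [&& (u, v) \in H', u \in a v, i <= #|a u :\ v| &
                 [exists S : {set V},
                    [&& S \subset a u :\ v, #|S| == i & ind u v S]]]
           then H' :\ (u, v) :\ (v, u) else H')
        H [seq (u, v) | u <- ord, v <- ord].

Definition stable_skeleton (ind : ci_oracle) (ord : seq V) : ugraph :=
  iteri #|V|.-1 (fun i H => level_step ind ord i H) complete_graph.

Definition sepsets (ind : ci_oracle) (H : ugraph) (u v : V) : {set {set V}} :=
  [set S : {set V} | (S \subset adj H u) && ind u v S].

Definition cpc_unamb (ind : ci_oracle) (H : ugraph) (u v w : V) : bool :=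
  let Ss := sepsets ind H u v in
  (Ss != set0) &&
  ([forall S in Ss, ind u v (w |: S)] || [forall S in Ss, ~~ ind u v (w |: S)]).

Definition cpc_orient (ind : ci_oracle) (H : ugraph) (u v w : V) : bool :=
  cpc_unamb ind H u v w &&
  [forall S in sepsets ind H u v, ~~ ind u v (w |: S)].

Definition sep_percentage (ind : ci_oracle) (H : ugraph) (u v w : V) : rat :=
  let Ss := sepsets ind H u v in
  ((100 * #|[set S in Ss | ind u v (w |: S)]|)%:R / #|Ss|%:R)%R.

Definition mpc_unamb (alpha beta : rat) (ind : ci_oracle) (H : ugraph)
  (u v w : V) : bool :=
  (sepsets ind H u v != set0) &&
  ((sep_percentage ind H u v w <= alpha)%R ||
   (beta <= sep_percentage ind H u v w)%R).

Definition mpc_orient (alpha beta : rat) (ind : ci_oracle) (H : ugraph)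
  (u v w : V) : bool :=
  mpc_unamb alpha beta ind H u v w && (sep_percentage ind H u v w < alpha)%R.

(* The pair (u,w) is in [ambiguous_marks] iff the edge u - w of H is ambiguous
   with respect to some pair u, v non-adjacent in H; it is in [recovered_arrows]
   iff u - w is oriented u -> w with respect to some such pair u, v. *)
Definition nonadj_pair (H : ugraph) (u v : V) : bool := (u != v) && ((u, v) \notin H).

Definition ambiguous_marks (unamb : ugraph -> V -> V -> V -> bool) (H : ugraph)
  : {set V * V} :=
  [set e : V * V | (e \in H) &&
     [exists v, nonadj_pair H e.1 v && ~~ unamb H e.1 v e.2]].

Definition recovered_arrows (orient : ugraph -> V -> V -> V -> bool) (H : ugraph)
  : {set V * V} :=
  [set e : V * V | (e \in H) &&
     [exists v, nonadj_pair H e.1 v && orient H e.1 v e.2]].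

Definition undirected_rel (H : ugraph) (A : {set V * V}) : rel V :=
  fun x y => [&& (x, y) \in H, (x, y) \notin A & (y, x) \notin A].

(* There is an undirected path in H* from w1 to w2 none of whose intermediate
   vertices satisfies ~~ ok: the path has length 0, length 1, or is
   w1 - x - ... - y - w2 with all of x, ..., y ok. *)
Definition upath (R : rel V) (ok : pred V) (w1 w2 : V) : bool :=
  [|| w1 == w2, R w1 w2 |
     [exists x, exists y,
        [&& ok x, ok y, R w1 x, R y w2 &
            connect (fun a b => [&& R a b, ok a & ok b]) x y]]].

Definition complex_pair (H : ugraph) (A : {set V * V}) (a1 a2 : V * V) : bool :=
  [&& a1 \in A, a2 \in A, a1.1 != a2.1 &
      upath (undirected_rel H A)
            (fun x => (x \notin adj H a1.1) && (x \notin adj H a2.1)) a1.2 a2.2].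

Definition complex_arrows (H : ugraph) (A : {set V * V}) : {set V * V} :=
  [set a : V * V | [exists b : V * V, complex_pair H A a b || complex_pair H A b a]].

(* Output: the skeleton, the complex arrows (all other edges undirected),
   and the ambiguity marks. *)
Definition output (unamb orient : ugraph -> V -> V -> V -> bool) (H : ugraph)
  : ugraph * {set V * V} * {set V * V} :=
  (H, complex_arrows H (recovered_arrows orient H), ambiguous_marks unamb H).

Definition stable_cpc (ind : ci_oracle) (ord : seq V) :=
  output (cpc_unamb ind) (cpc_orient ind) (stable_skeleton ind ord).

Definition stable_mpc (alpha beta : rat) (ind : ci_oracle) (ord : seq V) :=
  output (mpc_unamb alpha beta ind) (mpc_orient alpha beta ind)
         (stable_skeleton ind ord).

End ChainGraphPC.

(* Main.v *)
Require Import Defs.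
From HB Require Import structures.
From mathcomp Require Import all_boot all_order all_algebra.
Import Order.TTheory GRing.Theory Num.Theory.

Set Implicit Arguments.

Definition Eset (V : finType) (H : {set V * V}) (C : V -> V -> bool) (s : seq (V * V)) :=
  [set p | has (fun q : V * V => [&& (q.1, q.2) \in H, C q.1 q.2 &
                 (p == (q.1, q.2)) || (p == (q.2, q.1))]) s].

Lemma fold_char (V : finType) (H : {set V * V}) (C : V -> V -> bool) s :
  foldl (fun (H' : {set V * V}) (p : V * V) =>
     if ((p.1, p.2) \in H') && C p.1 p.2 then H' :\ (p.1, p.2) :\ (p.2, p.1) else H')
   H s = H :\: Eset H C s.
Proof.
elim/last_ind: s => [|s [x y] IH].
  by apply/setP => p; rewrite !inE.
rewrite foldl_rcons IH /=.
have EE : forall p, (p \in Eset H C (rcons s (x, y))) =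
   ([&& (x, y) \in H, C x y & (p == (x, y)) || (p == (y, x))] || (p \in Eset H C s)).
  by move=> p; rewrite !inE has_rcons.
case hH: ((x, y) \in H); case hC: (C x y); rewrite in_setD ?hH ?hC ?andbF ?andbT /=;
  try by apply/setP => p; rewrite !in_setD EE hH ?hC.
case hE: ((x, y) \in Eset H C s) => /=.
  have hE2 : (y, x) \in Eset H C s.
    move: hE; rewrite !inE => /hasP [q qs /and3P [q1 q2 q3]].
    apply/hasP; exists q => //; rewrite q1 q2 /=.
    by case/orP: q3 => /eqP [-> ->]; rewrite eqxx ?orbT.
  apply/setP => p; rewrite !in_setD EE hH hC /=.
  case: eqP => [->|_]; first by rewrite hE.
  case: eqP => [->|_]; first by rewrite hE2.
  by [].
apply/setP => p; rewrite !in_setD EE hH hC /= !inE.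
by case: eqP => [->|_]; case: eqP => [->|_].
Qed.

Lemma level_char (V : finType) (ind : ci_oracle V) ord i (H : ugraph V) :
  level_step ind ord i H = H :\: Eset H (fun u v => [&& u \in adj H v, i <= #|adj H u :\ v| &
                 [exists S : {set V},
                    [&& S \subset adj H u :\ v, #|S| == i & ind u v S]]])
     [seq (u, v) | u <- ord, v <- ord].
Proof. exact: fold_char. Qed.

Lemma level_indep (V : finType) (ind : ci_oracle V) ord1 ord2 i (H : ugraph V) :
  perm_eq ord1 (enum V) -> perm_eq ord2 (enum V) ->
  level_step ind ord1 i H = level_step ind ord2 i H.
Proof.
move=> h1 h2; rewrite !level_char; congr (_ :\: _); apply/setP => p; rewrite !inE.
apply: eq_has_r => -[u v].
by rewrite !allpairs_f // ?(perm_mem h1) ?(perm_mem h2) ?mem_enum.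
Qed.

Lemma skel_indep (V : finType) (ind : ci_oracle V) ord1 ord2 :
  perm_eq ord1 (enum V) -> perm_eq ord2 (enum V) ->
  stable_skeleton ind ord1 = stable_skeleton ind ord2.
Proof.
move=> h1 h2; rewrite /stable_skeleton; elim: #|V|.-1 => [|n IH] //=.
by rewrite IH; apply: level_indep.
Qed.

Theorem theorem4 (V : finType) (ind : ci_oracle V)
  (ind_sym : forall (u v : V) (S : {set V}), ind u v S = ind v u S)
  (ord1 ord2 : seq V)
  (hord1 : perm_eq ord1 (enum V)) (hord2 : perm_eq ord2 (enum V)) :
  let H1 := stable_skeleton ind ord1 in
  let H2 := stable_skeleton ind ord2 in
  (* CPC-like: U-structure decisions and output are order independent *)
  [/\ ambiguous_marks (cpc_unamb ind) H1 = ambiguous_marks (cpc_unamb ind) H2,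
      recovered_arrows (cpc_orient ind) H1 = recovered_arrows (cpc_orient ind) H2,
      complex_arrows H1 (recovered_arrows (cpc_orient ind) H1)
        = complex_arrows H2 (recovered_arrows (cpc_orient ind) H2)
    & stable_cpc ind ord1 = stable_cpc ind ord2] /\
  (* MPC-like, for all admissible parameters *)
  (forall alpha beta : rat, (0 <= alpha)%R -> (alpha <= beta)%R -> (beta <= 100)%R ->
  [/\ ambiguous_marks (mpc_unamb alpha beta ind) H1
        = ambiguous_marks (mpc_unamb alpha beta ind) H2,
      recovered_arrows (mpc_orient alpha beta ind) H1
        = recovered_arrows (mpc_orient alpha beta ind) H2,
      complex_arrows H1 (recovered_arrows (mpc_orient alpha beta ind) H1)
        = complex_arrows H2 (recovered_arrows (mpc_orient alpha beta ind) H2)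
    & stable_mpc alpha beta ind ord1 = stable_mpc alpha beta ind ord2]).
Proof.
move=> H1 H2.
have E : H1 = H2 by exact: skel_indep.
rewrite /stable_cpc /stable_mpc -/H1 -/H2 E.
by split=> // alpha beta _ _ _.
Qed.
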